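(* Let $Y_1,Y_2$ be nonzero ordinary differential operators (with coefficients in $\mathbb C(x)$), and set $X=Y_1Y_2$ and $\hat X=Y_2Y_1$. Then $X$ and $\hat X$ have the same true rank.
   Context: The rank of a set of ordinary differential operators is the greatest common divisor of the orders of its elements. The true rank of an ordinary differential operator is the rank of its centralizer in the ring of ordinary differential operators (here, those with coefficients in $\mathbb C(x)$). *)

(* Defs.v *)
From mathcomp Require Import all_boot all_algebra.
From mathcomp Require Import complex fraction.
From mathcomp Require Import Rstruct.
Set Implicit Arguments. Unset Strict Implicit. Unset Printing Implicit Defensive.
Import GRing.Theory.
Local Open Scope ring_scope.

Definition Cplx : fieldType := complex Rdefinitions.R.

Definition Kx : fieldType := {fraction {poly Cplx}}.

(* The derivation d/dx on C(x): for f = n/d (any representative),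
   f' = (n' d - n d') / d^2.  This is independent of the representative. *)
Definition fderiv (f : Kx) : Kx :=
  let r := repr f in
  let n := \n_r in let d := \d_r in
  tofrac (n^`() * d - n * d^`()) / tofrac (d ^+ 2).

(* An ordinary differential operator  L = sum_i a_i D^i  (a_i in C(x))
   is represented by the polynomial  sum_i a_i 'X^i  in {poly Kx};
   addition and C(x)-scaling on the left are the polynomial ones, but the
   multiplication is the one of the ring of differential operators
   (D a = a D + a'). *)
Definition diffop := {poly Kx}.

(* D * M *)
Definition dop_D (M : diffop) : diffop := map_poly fderiv M + M * 'X.

Definition dop_mul (L M : diffop) : diffop :=
  \sum_(i < size L) L`_i *: iter i dop_D M.

Definition dop_order (L : diffop) : nat := (size L).-1.

Definition centralizer (L : diffop) : diffop -> Prop :=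
  fun M => dop_mul L M = dop_mul M L.

Definition is_rank (S : diffop -> Prop) (r : nat) : Prop :=
  (forall M, S M -> (r %| dop_order M)%N) /\
  (forall d : nat, (forall M, S M -> (d %| dop_order M)%N) -> (d %| r)%N).

Definition is_true_rank (L : diffop) (r : nat) : Prop :=
  is_rank (centralizer L) r.

(* Main.v *)
Require Import Defs.
From mathcomp Require Import all_boot all_algebra.
From mathcomp Require Import complex fraction generic_quotient.
From mathcomp Require Import ring.
Import GRing.Theory.
Local Open Scope ring_scope.
Local Open Scope quotient_scope.
Notation P := {poly Cplx}.
Notation tf := (@FracField.tofrac P).
Lemma tfE (p : P) : tf p = \pi_Kx (Ratio p 1).
Proof. by unlock FracField.tofrac. Qed.
Lemma piM (a b : {ratio P}) : \pi_Kx (FracField.mulf a b) = \pi_Kx a * \pi_Kx b.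
Proof. exact: FracField.pi_mul. Qed.
Lemma pi_frac (x : {ratio P}) :
  (\pi_Kx x) = tf (\n_x) / tf (\d_x).
Proof.
have dn0 : tf \d_x != 0 by rewrite tofrac_eq0; exact: denom_ratioP.
rewrite -[LHS](mulfK dn0); congr (_ / _).
rewrite !tfE -piM.
apply/eqmodP; rewrite /= FracField.equivfE /FracField.mulf.
rewrite !numden_Ratio ?oner_neq0 ?mulf_neq0 ?oner_neq0 //.
by rewrite !mulr1 mulrC. exact: denom_ratioP. exact: denom_ratioP.
Qed.

Definition g (n d : P) : Kx := tf (n^`() * d - n * d^`()) / tf (d ^+ 2).

Lemma g_wd (n d n2 d2 : P) : d != 0 -> d2 != 0 -> n * d2 = n2 * d -> g n d = g n2 d2.
Proof.
move=> d0 d20 E.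
have E2 : n^`() * d2 + n * d2^`() = n2^`() * d + n2 * d^`().
  by rewrite -!derivM E.
rewrite /g; apply/eqP; rewrite eqr_div ?tofrac_eq0 ?expf_neq0 //.
rewrite -!tofracM tofrac_eq; apply/eqP.
apply/eqP; rewrite -subr_eq0; apply/eqP.
have -> : (n^`() * d - n * d^`()) * d2 ^+ 2 - (n2^`() * d2 - n2 * d2^`()) * d ^+ 2
   = - (d2 * d * ((n2^`() * d + n2 * d^`()) - (n^`() * d2 + n * d2^`()))
        + (d2^`() * d + d^`() * d2) * (n * d2 - n2 * d)).
  by ring.
by rewrite E E2 !subrr mulr0 mulr0 addr0 oppr0.
Qed.

Lemma fderiv_repr (f : Kx) : fderiv f = g (\n_(repr f)) (\d_(repr f)).
Proof. reflexivity. Qed.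

Lemma pi_repr (f : Kx) : \pi_Kx (repr f) = f.
Proof. exact: reprK. Qed.

Lemma fderivE (n d : P) : d != 0 -> fderiv (tf n / tf d) = g n d.
Proof.
move=> d0.
rewrite fderiv_repr.
have := pi_repr (tf n / tf d).
move: (repr _) => r; rewrite pi_frac => H.
have r0 : \d_r != 0 by exact: denom_ratioP.
apply: (g_wd _ _ _ _ r0 d0).
have dr0 : tf \d_r != 0 by rewrite tofrac_eq0; exact: denom_ratioP.
have dd0 : tf d != 0 by rewrite tofrac_eq0.
move/eqP: H; rewrite (eqr_div _ _ dr0 dd0) -!tofracM tofrac_eq => /eqP ->.
by rewrite mulrC.
Qed.

Lemma frac_rep (f : Kx) : exists n d, d != 0 /\ f = tf n / tf d.
Proof.
exists (\n_(repr f)), (\d_(repr f)); split; first exact: denom_ratioP.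
by rewrite -pi_frac pi_repr.
Qed.

Lemma tf_neq0 {d : P} : d != 0 -> tf d != 0.
Proof. by rewrite tofrac_eq0. Qed.

Lemma gD (F : fieldType) (n1 d1 n2 d2 n1' d1' n2' d2' : F) :
  d1 != 0 -> d2 != 0 ->
  ((n1' * d2 + n1 * d2' + (n2' * d1 + n2 * d1')) * (d1 * d2) -
   (n1 * d2 + n2 * d1) * (d1' * d2 + d1 * d2')) / (d1 * d2 * (d1 * d2))
  = (n1' * d1 - n1 * d1') / (d1 * d1) + (n2' * d2 - n2 * d2') / (d2 * d2).
Proof. move=> h1 h2. field. by rewrite h1 h2. Qed.

Lemma fderivD (a b : Kx) : fderiv (a + b) = fderiv a + fderiv b.
Proof.
have [n1 [d1 [d10 ->]]] := frac_rep a.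
have [n2 [d2 [d20 ->]]] := frac_rep b.
have d12 : d1 * d2 != 0 by rewrite mulf_neq0.
have h1 := tf_neq0 d10.
have h2 := tf_neq0 d20.
rewrite (addf_div _ _ h1 h2) -!tofracM -tofracD.
rewrite (fderivE _ _ d12) (fderivE _ _ d10) (fderivE _ _ d20) /g.
rewrite !(tofracD, tofracB, tofracN, tofracM, tofracXn, derivM, derivD).
exact: gD h1 h2.
Qed.

Lemma gM (F : fieldType) (n1 d1 n2 d2 n1' d1' n2' d2' : F) :
  d1 != 0 -> d2 != 0 ->
  ((n1' * n2 + n1 * n2') * (d1 * d2) - n1 * n2 * (d1' * d2 + d1 * d2')) / (d1 * d2 * (d1 * d2))
  = (n1' * d1 - n1 * d1') / (d1 * d1) * (n2 / d2) + n1 / d1 * ((n2' * d2 - n2 * d2') / (d2 * d2)).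
Proof. move=> h1 h2. field. by rewrite h1 h2. Qed.

Lemma fderivM (a b : Kx) : fderiv (a * b) = fderiv a * b + a * fderiv b.
Proof.
have [n1 [d1 [d10 ->]]] := frac_rep a.
have [n2 [d2 [d20 ->]]] := frac_rep b.
have d12 : d1 * d2 != 0 by rewrite mulf_neq0.
have h1 := tf_neq0 d10.
have h2 := tf_neq0 d20.
rewrite mulf_div -!tofracM.
rewrite (fderivE _ _ d12) (fderivE _ _ d10) (fderivE _ _ d20) /g.
rewrite !(tofracD, tofracB, tofracN, tofracM, tofracXn, derivM, derivD).
exact: gM h1 h2.
Qed.

Lemma fderiv0 : fderiv 0 = 0.
Proof.
have := fderivD 0 0; rewrite addr0 => /(congr1 (fun x => x - fderiv 0)).
by rewrite subrr addrK.
Qed.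

Lemma coef_dD (M : diffop) j :
  (dop_D M)`_j = fderiv M`_j + (if j == 0%N then 0 else M`_j.-1).
Proof. by rewrite /dop_D coefD coef_map_id0 ?fderiv0 ?coefMX. Qed.

Lemma dD_add (P Q : diffop) : dop_D (P + Q) = dop_D P + dop_D Q.
Proof.
apply/polyP => j; rewrite !(coefD, coef_dD) fderivD.
case: (j == 0%N); first by rewrite !addr0.
by rewrite addrACA.
Qed.

Lemma dD0 : dop_D 0 = 0.
Proof. apply/polyP => j; rewrite coef_dD coef0 fderiv0 add0r. by case: (j == 0%N); rewrite ?coef0. Qed.

Lemma dD_scale c (P : diffop) : dop_D (c *: P) = fderiv c *: P + c *: dop_D P.
Proof.
apply/polyP => j; rewrite !(coefD, coefZ, coef_dD) fderivM mulrDr -addrA.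
congr (_ + _); case: (j == 0%N); first by rewrite mulr0.
by [].
Qed.

Lemma iterD_add i (P Q : diffop) : iter i dop_D (P + Q) = iter i dop_D P + iter i dop_D Q.
Proof. by elim: i => [|i IH] //=; rewrite IH dD_add. Qed.

Lemma iterD0 i : iter i dop_D 0 = 0.
Proof. by elim: i => [|i IH] //=; rewrite IH dD0. Qed.

Lemma dop_mulE (L M : diffop) n : (size L <= n)%N ->
  dop_mul L M = \sum_(i < n) L`_i *: iter i dop_D M.
Proof.
move=> h; rewrite /dop_mul (big_ord_widen _ (fun i => L`_i *: iter i dop_D M) h) big_mkcond.
apply: eq_bigr => i _; case: ifP => // /negbT; rewrite -leqNgt => h2.
by rewrite nth_default // scale0r.
Qed.

Lemma dop_mul_addl (L1 L2 M : diffop) : dop_mul (L1 + L2) M = dop_mul L1 M + dop_mul L2 M.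
Proof.
set n := maxn (size L1) (size L2).
rewrite (@dop_mulE (L1 + L2) M n (size_polyD L1 L2)) (@dop_mulE L1 M n (leq_maxl _ _)) (@dop_mulE L2 M n (leq_maxr _ _)).
by rewrite -big_split; apply: eq_bigr => i _; rewrite coefD scalerDl.
Qed.

Lemma dop_mul0l (M : diffop) : dop_mul 0 M = 0.
Proof. by rewrite /dop_mul size_poly0 big_ord0. Qed.

Lemma dop_mul_scalel c (L M : diffop) : dop_mul (c *: L) M = c *: dop_mul L M.
Proof.
rewrite (@dop_mulE _ M _ (size_scale_leq c L)) (@dop_mulE L M _ (leqnn _)) scaler_sumr.
by apply: eq_bigr => i _; rewrite coefZ scalerA.
Qed.

Lemma dop_mul_addr (L M1 M2 : diffop) : dop_mul L (M1 + M2) = dop_mul L M1 + dop_mul L M2.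
Proof. by rewrite /dop_mul -big_split; apply: eq_bigr => i _; rewrite iterD_add scalerDr. Qed.

Lemma dop_mul0r (L : diffop) : dop_mul L 0 = 0.
Proof. by rewrite /dop_mul big1 // => i _; rewrite iterD0 scaler0. Qed.

Lemma dop_mul_sum n (F : 'I_n -> diffop) (M : diffop) :
  dop_mul (\sum_(i < n) F i) M = \sum_(i < n) dop_mul (F i) M.
Proof.
exact: (big_morph (fun L => dop_mul L M) (fun a b => dop_mul_addl a b M) (dop_mul0l M)).
Qed.

Lemma dD_sum n (F : 'I_n -> diffop) :
  dop_D (\sum_(i < n) F i) = \sum_(i < n) dop_D (F i).
Proof. exact: (big_morph dop_D dD_add dD0). Qed.

Lemma dD_size (M : diffop) : (size (dop_D M) <= (size M).+1)%N.
Proof.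
apply/leq_sizeP => -[|j] hj; first by [].
have h : (size M <= j)%N := hj.
rewrite coef_dD /= (nth_default _ h) (nth_default _ (leq_trans h (leqnSn _))).
by rewrite fderiv0 add0r.
Qed.

Lemma dD_mul (M N : diffop) : dop_D (dop_mul M N) = dop_mul (dop_D M) N.
Proof.
rewrite (@dop_mulE _ N _ (dD_size M)) /dop_mul dD_sum.
under eq_bigr => i _ do rewrite dD_scale.
under [RHS]eq_bigr => i _ do rewrite coef_dD scalerDl.
rewrite !big_split /=; congr (_ + _).
  by rewrite big_ord_recr /= [M`_(size M)]nth_default // fderiv0 scale0r addr0.
rewrite big_ord_recl /= scale0r add0r.
by apply: eq_bigr => i _; rewrite add0n.
Qed.

Lemma iter_dD_mul i (M N : diffop) :
  iter i dop_D (dop_mul M N) = dop_mul (iter i dop_D M) N.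
Proof. by elim: i => [|i IH] //=; rewrite IH dD_mul. Qed.

Lemma dop_mulA (L M N : diffop) : dop_mul (dop_mul L M) N = dop_mul L (dop_mul M N).
Proof.
rewrite (@dop_mulE L M _ (leqnn _)) (@dop_mulE L (dop_mul M N) _ (leqnn _)) dop_mul_sum.
by apply: eq_bigr => i _; rewrite dop_mul_scalel iter_dD_mul.
Qed.

Lemma size_eq_helper (p : diffop) n :
  (size p <= n.+1)%N -> p`_n != 0 -> size p = n.+1.
Proof.
move=> h nz; apply/eqP; rewrite eqn_leq h /=; rewrite ltnNge; apply/negP => h2.
by move: nz; rewrite nth_default // eqxx.
Qed.

Lemma dD_nz (M : diffop) : M != 0 ->
  size (dop_D M) = (size M).+1 /\ lead_coef (dop_D M) = lead_coef M.
Proof.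
move=> Mnz.
have hc : (dop_D M)`_(size M) = lead_coef M.
  rewrite coef_dD nth_default // fderiv0 add0r.
  by rewrite -size_poly_eq0 in Mnz; rewrite (negbTE Mnz).
have hs : size (dop_D M) = (size M).+1.
  by apply: size_eq_helper; [exact: dD_size | rewrite hc lead_coef_eq0].
by split => //; rewrite lead_coefE hs /= hc.
Qed.

Arguments dD_nz {M}.

Lemma iter_nz i (M : diffop) : M != 0 ->
  size (iter i dop_D M) = (size M + i)%N /\ lead_coef (iter i dop_D M) = lead_coef M.
Proof.
move=> Mnz; elim: i => [|i [IH1 IH2]]; first by rewrite addn0.
have nz : iter i dop_D M != 0.
  by rewrite -size_poly_eq0 IH1 addn_eq0 size_poly_eq0 (negbTE Mnz).
have [h1 h2] := dD_nz nz.
by rewrite /= h1 h2 IH1 IH2 addnS.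
Qed.

Arguments iter_nz i {M}.

Lemma dop_mul_order (L M : diffop) : L != 0 -> M != 0 ->
  dop_order (dop_mul L M) = (dop_order L + dop_order M)%N /\ dop_mul L M != 0.
Proof.
move=> Lnz Mnz.
have hL := polySpred Lnz; have hM := polySpred Mnz.
set s := (size L).-1 in hL; set m := (size M).-1 in hM.
have ls : L`_s != 0 by rewrite -lead_coef_eq0 in Lnz.
rewrite (@dop_mulE L M s.+1 (eq_leq hL)) big_ord_recr /=.
have [i1 _] := iter_nz s Mnz.
have hT : size (L`_s *: iter s dop_D M) = (m + s).+1.
  by rewrite size_scale // i1 hM addSn.
have hS : (size (\sum_(i < s) L`_i *: iter i dop_D M)%R <= m + s)%N.
  apply/leq_sizeP => j hj; rewrite coef_sum; apply: big1 => i _.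
  have [i2 _] := iter_nz i Mnz.
  have hi : (size (iter i dop_D M) <= j)%N.
    by rewrite i2 hM addSn; apply: leq_trans hj; rewrite ltn_add2l.
  by rewrite coefZ (nth_default _ hi) mulr0.
have hsz : size (\sum_(i < s) L`_i *: iter i dop_D M + L`_s *: iter s dop_D M) = (m + s).+1.
  by rewrite addrC size_polyDl hT // ltnS.
split; first by rewrite /dop_order hsz /= -/s -/m addnC.
by rewrite -size_poly_eq0 hsz.
Qed.

Arguments dop_mul_order {L M}.

Lemma conj_centr (A B M : diffop) :
  centralizer (dop_mul B A) M ->
  centralizer (dop_mul A B) (dop_mul A (dop_mul M B)).
Proof.
rewrite /centralizer => hyp.
have e1 : dop_mul (dop_mul A B) (dop_mul A (dop_mul M B))
        = dop_mul A (dop_mul (dop_mul (dop_mul B A) M) B) by rewrite !dop_mulA.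
have e2 : dop_mul (dop_mul A (dop_mul M B)) (dop_mul A B)
        = dop_mul A (dop_mul (dop_mul M (dop_mul B A)) B) by rewrite !dop_mulA.
by rewrite e1 e2 hyp.
Qed.

Arguments conj_centr {A B M}.

Lemma order_conj (A B M : diffop) : A != 0 -> B != 0 -> M != 0 ->
  dop_order (dop_mul A (dop_mul M B)) = (dop_order M + (dop_order A + dop_order B))%N.
Proof.
move=> An Bn Mn.
have [o1 n1] := dop_mul_order Mn Bn.
have [o2 _] := dop_mul_order An n1.
by rewrite o2 o1 addnCA.
Qed.

Arguments order_conj {A B M}.

Lemma one_dir (Y1 Y2 : diffop) r : Y1 != 0 -> Y2 != 0 ->
  is_true_rank (dop_mul Y1 Y2) r -> is_true_rank (dop_mul Y2 Y1) r.
Proof.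
move=> n1 n2 [H1 H2].
have [oX _] := dop_mul_order n1 n2.
have [oXh _] := dop_mul_order n2 n1.
have rX : (r %| dop_order Y1 + dop_order Y2)%N by rewrite -oX; apply: H1.
split.
  move=> M hM; have [->|Mn] := eqVneq M 0; first by rewrite /dop_order size_poly0 dvdn0.
  have := H1 _ (conj_centr hM); rewrite (order_conj n1 n2 Mn).
  by rewrite (dvdn_addl _ rX).
move=> d hd; apply: H2 => M hM.
have dX : (d %| dop_order Y2 + dop_order Y1)%N.
  by rewrite -oXh; apply: hd; rewrite /centralizer.
have [->|Mn] := eqVneq M 0; first by rewrite /dop_order size_poly0 dvdn0.
have := hd _ (conj_centr hM); rewrite (order_conj n2 n1 Mn).
by rewrite (dvdn_addl _ dX).
Qed.

Local Close Scope quotient_scope.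

Theorem mainTheorem15 (Y1 Y2 : diffop) :
  Y1 != 0 -> Y2 != 0 ->
  forall r : nat,
    is_true_rank (dop_mul Y1 Y2) r <-> is_true_rank (dop_mul Y2 Y1) r.
Proof.
move=> n1 n2 r; split; [exact: one_dir | exact: one_dir].
Qed.
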